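(* Every finite indecomposable non-degenerate solution $(X,r)$ of the Yang--Baxter equation with $|X|$ a prime number is simple.
   Context: A set-theoretic solution $(X,r)$: $X$ non-empty, $r\colon X\times X\to X\times X$ satisfying $(r\times\mathrm{id})(\mathrm{id}\times r)(r\times\mathrm{id})=(\mathrm{id}\times r)(r\times\mathrm{id})(\mathrm{id}\times r)$; write $r(x,y)=(\lambda_x(y),\rho_y(x))$; non-degenerate means $r$ bijective and all $\lambda_x,\rho_y$ bijective. $(X,r)$ is decomposable if $X=Y\cup Z$ with $Y,Z$ disjoint non-empty and $r(Y\times Y)\subseteq Y\times Y$, $r(Z\times Z)\subseteq Z\times Z$ with these restrictions being solutions; otherwise indecomposable. A morphism $f\colon(X,r)\to(Y,s)$ is a map with $(f\times f)r=s(f\times f)$; $(X,r)$ with $|X|>1$ is simple if every surjective morphism $(X,r)\to(Y,s)$ is bijective or has $|Y|=1$. *)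

(* Defs.v *)
From mathcomp Require Import all_boot.
Set Implicit Arguments. Unset Strict Implicit. Unset Printing Implicit Defensive.

(* A set-theoretic solution on a type X: r : X * X -> X * X satisfying the
   braid relation (r x id)(id x r)(r x id) = (id x r)(r x id)(id x r) on X^3. *)
Definition r12 {X : Type} (r : X * X -> X * X) (t : X * X * X) : X * X * X :=
  let: (x, y, z) := t in let: (a, b) := r (x, y) in (a, b, z).
Definition r23 {X : Type} (r : X * X -> X * X) (t : X * X * X) : X * X * X :=
  let: (x, y, z) := t in let: (a, b) := r (y, z) in (x, a, b).

Definition is_solution {X : Type} (r : X * X -> X * X) : Prop :=
  forall t, r12 r (r23 r (r12 r t)) = r23 r (r12 r (r23 r t)).

Definition lam {X : Type} (r : X * X -> X * X) (x y : X) : X := (r (x, y)).1.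
Definition rho {X : Type} (r : X * X -> X * X) (y x : X) : X := (r (x, y)).2.

Definition non_degenerate {X : Type} (r : X * X -> X * X) : Prop :=
  bijective r /\ (forall x, bijective (lam r x)) /\ (forall y, bijective (rho r y)).

Definition invariant_subsolution {X : Type} (r : X * X -> X * X) (Y : X -> Prop) : Prop :=
  (forall x y, Y x -> Y y -> Y (r (x, y)).1 /\ Y (r (x, y)).2) /\
  (forall x y z, Y x -> Y y -> Y z ->
     r12 r (r23 r (r12 r (x, y, z))) = r23 r (r12 r (r23 r (x, y, z)))).

Definition decomposable {X : Type} (r : X * X -> X * X) : Prop :=
  exists Y : X -> Prop,
    (exists y, Y y) /\ (exists z, ~ Y z) /\
    invariant_subsolution r Y /\ invariant_subsolution r (fun x => ~ Y x).

Definition indecomposable {X : Type} (r : X * X -> X * X) : Prop :=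
  ~ decomposable r.

Definition is_morphism {X Y : Type} (r : X * X -> X * X) (s : Y * Y -> Y * Y)
  (f : X -> Y) : Prop :=
  forall x y, (f (r (x, y)).1, f (r (x, y)).2) = s (f x, f y).

Definition surjective {X Y : Type} (f : X -> Y) : Prop := forall y, exists x, f x = y.

Definition simple_solution (X : finType) (r : X * X -> X * X) : Prop :=
  1 < #|X| /\
  forall (Y : Type) (s : Y * Y -> Y * Y) (f : X -> Y),
    is_solution s -> is_morphism r s f -> surjective f ->
    bijective f \/ (exists y0 : Y, forall y : Y, y = y0).

(* Main.v *)
From Stdlib Require Import ClassicalEpsilon.
Require Import Defs.
From mathcomp Require Import all_boot.

Definition edge {X : finType} (r : X * X -> X * X) : rel X :=
  fun x y => [exists a, y == lam r a x] || [exists b, y == rho r b x].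

Lemma inv_preserve (X : finType) (g : X -> X) (O : {set X}) z :
  injective g -> (forall u, u \in O -> g u \in O) -> g z \in O -> z \in O.
Proof.
move=> ig hO gz.
have sub : g @: O \subset O.
  by apply/subsetP=> v /imsetP [u uO ->]; apply: hO.
have eqO : g @: O = O by apply/eqP; rewrite eqEcard sub (card_imset _ ig) /=.
by rewrite -eqO (mem_imset _ _ ig) in gz.
Qed.

Lemma transitive_conn (X : finType) (r : X * X -> X * X) :
  is_solution r -> non_degenerate r -> indecomposable r ->
  forall a y, connect (edge r) a y.
Proof.
move=> sol [_ [bl br]] ind a y.
apply/negPn/negP => ny; apply: ind.
pose O := [set v | connect (edge r) a v].
have clO : forall u v, u \in O -> edge r u v -> v \in O.
  by move=> u v; rewrite !inE => hu huv; apply: connect_trans hu (connect1 huv).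
have lO : forall b u, u \in O -> lam r b u \in O.
  move=> b u uO; apply: (clO u _ uO); apply/orP; left; apply/existsP; by exists b.
have rO : forall b u, u \in O -> rho r b u \in O.
  move=> b u uO; apply: (clO u _ uO); apply/orP; right; apply/existsP; by exists b.
exists (fun v => v \in O); split; first by exists a; rewrite inE connect0.
split; first by exists y => h; move: h; rewrite inE => h; rewrite h in ny.
rewrite /invariant_subsolution; split; (split; last by move=> x y0 z _ _ _; apply: sol).
- by move=> x y0 hx hy; split; [exact: (lO x y0 hy) | exact: (rO y0 x hx)].
- move=> x y0 hx hy; split.
  + move=> h; apply: hy; exact: (@inv_preserve _ _ _ _ (bij_inj (bl x)) (lO x) h).
  + move=> h; apply: hx; exact: (@inv_preserve _ _ _ _ (bij_inj (br y0)) (rO y0) h).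
Qed.

Theorem mainTheorem9 (X : finType) (r : X * X -> X * X) :
  is_solution r -> non_degenerate r -> indecomposable r -> prime #|X| ->
  simple_solution r.
Proof.
move=> sol nd ind pr.
have p1 : 1 < #|X| by case/primeP: pr.
split=> // Y s f _ mor sur.
have [a0 _] : exists a : X, a \in predT by apply/card_gt0P; exact: ltnW.
pose E x y : bool := if excluded_middle_informative (f x = f y) then true else false.
have EP : forall x y, reflect (f x = f y) (E x y).
  by move=> x y; rewrite /E; case: excluded_middle_informative => h; constructor.
pose F x := [set y | E x y].
have Fg : forall g : X -> X, injective g ->
    (forall x y, f x = f y -> f (g x) = f (g y)) -> forall x, #|F x| <= #|F (g x)|.
  move=> g ig hg x; rewrite -(card_imset _ ig); apply: subset_leq_card.
  apply/subsetP => v /imsetP [u uF ->]; rewrite inE; apply/EP; apply: hg.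
  by rewrite inE in uF; apply/EP.
have [_ [bl br]] := nd.
have fl : forall a x y, f x = f y -> f (lam r a x) = f (lam r a y).
  by move=> a x y h; have := congr1 fst (mor a x); have := congr1 fst (mor a y); rewrite /lam /= h => -> ->.
have fr : forall b x y, f x = f y -> f (rho r b x) = f (rho r b y).
  by move=> b x y h; have := congr1 snd (mor x b); have := congr1 snd (mor y b); rewrite /rho /= h => -> ->.
pose m := \max_x #|F x|.
pose x0 := [arg max_(i > a0) #|F i|].
have hm0 : #|F x0| = m by rewrite /m (bigmax_eq_arg a0).
have step : forall u v, #|F u| = m -> edge r u v -> #|F v| = m.
  move=> u v hu euv; apply/eqP; rewrite eqn_leq (leq_bigmax (F := fun i => #|F i|) v) /=.
  rewrite -hu; case/orP: euv => /existsP [a /eqP ->].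
  - by apply: Fg => //; [exact: bij_inj (bl a) | exact: fl].
  - by apply: Fg => //; [exact: bij_inj (br a) | exact: fr].
have pth : forall p u, #|F u| = m -> path (edge r) u p -> #|F (last u p)| = m.
  elim=> [|v p IH] u hu //= /andP [euv pp]; apply: IH pp; exact: step hu euv.
have allm : forall y, #|F y| = m.
  move=> y; have /connectP [p pp ->] := @transitive_conn X r sol nd ind x0 y.
  exact: pth hm0 pp.
have eqE : {in [set: X] & &, equivalence_rel E}.
  move=> x y z _ _ _; split; first by apply/EP.
  by move=> /EP hxy; apply/idP/idP => /EP h; apply/EP; rewrite ?hxy // -hxy.
have hpart := equivalence_partitionP eqE.
have hcard : #|[set: X]| = #|equivalence_partition E [set: X]| * m.
  apply: card_uniform_partition hpart => A /imsetP [x _ ->].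
  have -> : [set y in [set: X] | E x y] = F x by apply/setP => y; rewrite !inE.
  exact: allm.
rewrite cardsT in hcard.
have dm : m %| #|X| by rewrite hcard dvdn_mull.
case/primeP: pr => _ /(_ m dm) /orP [/eqP m1 | /eqP mX].
- have finj : injective f.
    move=> x y hxy; have /cards1P [z hz] : #|F x| == 1 by rewrite allm m1.
    have : x \in F x by rewrite inE; apply/EP.
    have : y \in F x by rewrite inE; apply/EP.
    by rewrite hz !inE => /eqP -> /eqP ->.
  left; exists (fun y => proj1_sig (constructive_indefinite_description _ (sur y))).
  + by move=> x; apply: finj; case: constructive_indefinite_description.
  + by move=> y; case: constructive_indefinite_description.
- right; exists (f a0) => y; have [x <-] := sur y.
  have : F x = [set: X].
    by apply/eqP; rewrite eqEcard subsetT cardsT allm mX leqnn.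
  move/setP/(_ a0); rewrite in_setT inE => h.
  by apply/EP; rewrite h.
Qed.
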